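(* Let $\mathcal{C}_7=\{0,2,8,12,20,22,28,30,40,42,48,50,58,62,68\}$. Every pair of primes $(3t-2,3t+2)$ with $t$ an odd integer and $3t-2\geq 103$ is of the form $(3s-2,3s+2)$ with $s=5\cdot 7(2n+1)+c$ for some integer $n\geq 0$ and some $c\in\mathcal{C}_7$. *)

(* Defs.v *)
From mathcomp Require Import all_boot.
Definition C7 : seq nat := [:: 0; 2; 8; 12; 20; 22; 28; 30; 40; 42; 48; 50; 58; 62; 68].

(* Main.v *)
Require Import Defs.
From mathcomp Require Import all_boot.
From mathcomp Require Import zify.

Lemma key (r : nat) : r < 70 -> odd r ->
  ~~ (5 %| 3 * r + 2) -> ~~ (5 %| 3 * r + 68) ->
  ~~ (7 %| 3 * r + 2) -> ~~ (7 %| 3 * r + 68) ->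
  (if 35 <= r then r - 35 else r + 35) \in C7.
Proof.
move=> lt; do 70! (case: r lt => [|r] lt; [by []|]); by [].
Qed.

Theorem proposition3p5 (t : nat) :
  odd t -> 103 <= 3 * t - 2 -> prime (3 * t - 2) -> prime (3 * t + 2) ->
  exists (n c : nat), c \in C7 /\ t = 5 * 7 * (2 * n + 1) + c.
Proof.
move=> ot ht p1 p2.
have nd : forall q p, prime p -> 7 < p -> q <= 7 -> 1 < q -> ~~ (q %| p).
  move=> q p pp lp lq gq; apply/negP => /(prime_nt_dvdP pp) H.
  have : q = p by apply: H; lia. lia.
have hr : t = t %/ 70 * 70 + t %% 70 := divn_eq t 70.
set r := t %% 70 in hr. have rlt0 : r < 70 by rewrite /r ltn_mod. clearbody r.
have rlt := rlt0.
have orr : odd r.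
  move: ot; rewrite hr oddD oddM /= andbF /=. by [].
have a1 : ~~ (5 %| 3 * r + 68).
  apply: contra (nd 5 _ p1 ltac:(lia) isT isT) => d.
  have e : 3 * t - 2 + 5 * 14 = (3 * r + 68) + 5 * (3 * (t %/ 70) * 14) by lia.
  have : 5 %| 3 * t - 2 + 5 * 14 by rewrite e dvdn_add // dvdn_mulr.
  by rewrite dvdn_addl // dvdn_mulr.
have a2 : ~~ (7 %| 3 * r + 68).
  apply: contra (nd 7 _ p1 ltac:(lia) isT isT) => d.
  have e : 3 * t - 2 + 7 * 10 = (3 * r + 68) + 7 * (3 * (t %/ 70) * 10) by lia.
  have : 7 %| 3 * t - 2 + 7 * 10 by rewrite e dvdn_add // dvdn_mulr.
  by rewrite dvdn_addl // dvdn_mulr.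
have a3 : ~~ (5 %| 3 * r + 2).
  apply: contra (nd 5 _ p2 ltac:(lia) isT isT) => d.
  have -> : 3 * t + 2 = (3 * r + 2) + 5 * (3 * (t %/ 70) * 14) by lia.
  by rewrite dvdn_addr // dvdn_mulr.
have a4 : ~~ (7 %| 3 * r + 2).
  apply: contra (nd 7 _ p2 ltac:(lia) isT isT) => d.
  have -> : 3 * t + 2 = (3 * r + 2) + 7 * (3 * (t %/ 70) * 10) by lia.
  by rewrite dvdn_addr // dvdn_mulr.
have K := @key r rlt orr a3 a1 a4 a2.
case: (leqP 35 r) K => hc K.
  exists (t %/ 70), (r - 35); split => //; lia.
exists (t %/ 70 - 1), (r + 35); split => //; lia.
Qed.
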